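(* Let $v$ be a floating-point value (zero or a normal IEEE 754 double) with $\alpha = DP(v) \le 22$ and $\beta = DS(v) \le 15$. For each integer $i \ge 0$ let $\varepsilon_i = |v \otimes 10^{i} - round(v \otimes 10^{i})|$ and $\mu_i = |v \otimes 10^{i}| \times 2^{-52}$ (these two quantities being evaluated exactly on the double $v \otimes 10^i$). Then $\varepsilon_i > \mu_i$ for every $i \in \{0, 1, \dots, \alpha - 1\}$, and $\varepsilon_\alpha \le \mu_\alpha$.
   Context: Convention: a floating-point value $v$ is identified with the decimal number given by its decimal format $DF(v)$, i.e. its shortest decimal representation that reads back to $v$. For a nonzero terminating decimal $x$, $DP(x)$ is the least nonnegative integer $j$ with $x \times 10^j$ an integer, and $DS(x) = DP(x) + \lfloor \log_{10}|x|\rfloor + 1$; $DP(0)=DS(0)=0$. $v \otimes 10^{i}$ denotes the product computed in IEEE 754 double-precision arithmetic (round-to-nearest), with $10^i$ represented as a double. $round(\cdot)$ denotes rounding to the nearest integer. *)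

(* Defs.v *)
From Stdlib Require Import Reals ZArith.
Open Scope R_scope.

(* floor of a real: IZR (up x) is the least integer > x, so floor x = up x - 1 *)
Definition Zfloor (x : R) : Z := (up x - 1)%Z.

Definition bpow2 (e : Z) : R := powerRZ 2 e.
Definition pow10 (e : Z) : R := powerRZ 10 e.

Definition is_double (x : R) : Prop :=
  exists m e : Z, x = IZR m * bpow2 e /\ (Z.abs m < 2 ^ 53)%Z /\
                  (-1074 <= e <= 971)%Z.

Definition is_zero_or_normal_double (x : R) : Prop :=
  is_double x /\ (x = 0 \/ bpow2 (-1022) <= Rabs x).

(* binary magnitude: mag x = floor(log2 |x|) + 1, i.e. 2^(mag x - 1) <= |x| < 2^(mag x) *)
Definition mag2 (x : R) : Z := (Zfloor (ln (Rabs x) / ln 2) + 1)%Z.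

(* canonical exponent of the binary64 format (precision 53, subnormals down to 2^-1074) *)
Definition cexp (x : R) : Z := Z.max (mag2 x - 53) (-1074).

Definition Znearest_even (m : R) : Z :=
  let f := Zfloor m in
  if Rlt_dec (m - IZR f) (/2) then f
  else if Rlt_dec (/2) (m - IZR f) then (f + 1)%Z
  else if Z.even f then f else (f + 1)%Z.

(* IEEE 754 round-to-nearest-even into binary64 (no upper exponent bound;
   overflow never occurs in the situations considered) *)
Definition round_ne (x : R) : R :=
  let e := cexp x in IZR (Znearest_even (x * bpow2 (- e))) * bpow2 e.

Definition double_pow10 (i : nat) : R := round_ne (10 ^ i).

Definition fmul_pow10 (v : R) (i : nat) : R := round_ne (v * double_pow10 i).

(* round(.) to nearest integer (tie rule is irrelevant for |y - round y|) *)
Definition round_int (y : R) : Z := Zfloor (y + /2).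

Definition eps_i (v : R) (i : nat) : R :=
  Rabs (fmul_pow10 v i - IZR (round_int (fmul_pow10 v i))).

Definition mu_i (v : R) (i : nat) : R :=
  Rabs (fmul_pow10 v i) * bpow2 (-52).

Definition DF_candidate (v : R) (k : nat) (s n : Z) (x : R) : Prop :=
  (1 <= k)%nat /\
  (10 ^ (Z.of_nat k - 1) <= Z.abs s < 10 ^ Z.of_nat k)%Z /\
  x = IZR s * pow10 (n - Z.of_nat k) /\
  round_ne x = v.

(* x = DF(v): the shortest decimal reading back to v (ECMAScript
   Number::toString convention): minimal number k of significant digits;
   among those, the closest to v; on an exact tie, the one with even s. *)
Definition is_DF (v x : R) : Prop :=
  (v = 0 /\ x = 0) \/
  (v <> 0 /\
   exists (k : nat) (s n : Z),
     DF_candidate v k s n x /\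
     (forall k' s' n' y, DF_candidate v k' s' n' y -> (k <= k')%nat) /\
     (forall s' n' y, DF_candidate v k s' n' y -> Rabs (x - v) <= Rabs (y - v)) /\
     (forall s' n' y, DF_candidate v k s' n' y -> y <> x ->
                      Rabs (y - v) = Rabs (x - v) -> Z.even s = true)).

Definition is_DP (x : R) (j : nat) : Prop :=
  (exists z : Z, x * 10 ^ j = IZR z) /\
  (forall j' : nat, (j' < j)%nat -> ~ exists z : Z, x * 10 ^ j' = IZR z).

Definition DS_of (x : R) (j : nat) : Z :=
  if Req_EM_T x 0 then 0%Z
  else (Z.of_nat j + Zfloor (ln (Rabs x) / ln 10) + 1)%Z.

(* Main.v *)
Require Import Defs.
From Stdlib Require Import Reals ZArith.
Open Scope R_scope.
From Stdlib Require Import Lra Lia.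

Lemma Zfloor_spec t : IZR (Defs.Zfloor t) <= t < IZR (Defs.Zfloor t) + 1.
Proof.
  unfold Defs.Zfloor. destruct (archimed t) as [H1 H2].
  rewrite minus_IZR. simpl. lra.
Qed.

Lemma Zfloor_unique t n : IZR n <= t < IZR n + 1 -> Defs.Zfloor t = n.
Proof.
  intros [H1 H2]. unfold Defs.Zfloor.
  rewrite <- (tech_up t (n+1)); [lia| |]; rewrite plus_IZR; simpl; lra.
Qed.

Lemma ln2_pos : 0 < ln 2.
Proof. rewrite <- ln_1. apply ln_increasing; lra. Qed.

Lemma bpow2_exp e : bpow2 e = exp (IZR e * ln 2).
Proof. unfold bpow2. rewrite powerRZ_Rpower by lra. reflexivity. Qed.

Lemma bpow2_pos e : 0 < bpow2 e.
Proof. rewrite bpow2_exp. apply exp_pos. Qed.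

Lemma bpow2_add a b : bpow2 (a + b) = bpow2 a * bpow2 b.
Proof. unfold bpow2. apply powerRZ_add. lra. Qed.

Lemma bpow2_le a b : (a <= b)%Z -> bpow2 a <= bpow2 b.
Proof.
  intros H. rewrite !bpow2_exp. apply IZR_le in H.
  destruct (Req_dec (IZR a) (IZR b)) as [E|E].
  - rewrite E; lra.
  - left. apply exp_increasing. pose proof ln2_pos. nra.
Qed.

Lemma bpow2_lt_inv a b : bpow2 a < bpow2 b -> (a < b)%Z.
Proof.
  intros H. destruct (Z_lt_le_dec a b) as [|H']; auto.
  apply bpow2_le in H'. lra.
Qed.

Lemma bpow2_le_inv a b : bpow2 a <= bpow2 b -> (a <= b)%Z.
Proof.
  intros H. destruct (Z_le_gt_dec a b) as [|H']; auto.
  assert (b + 1 <= a)%Z as H2 by lia. apply bpow2_le in H2.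
  rewrite bpow2_add in H2. unfold bpow2 at 2 in H2. simpl in H2.
  pose proof (bpow2_pos b). lra.
Qed.

Lemma mag2_spec y : y <> 0 ->
  bpow2 (mag2 y - 1) <= Rabs y < bpow2 (mag2 y).
Proof.
  intros Hy. unfold mag2.
  set (L := ln (Rabs y) / ln 2).
  destruct (Zfloor_spec L) as [H1 H2].
  replace (Defs.Zfloor L + 1 - 1)%Z with (Defs.Zfloor L) by lia.
  rewrite !bpow2_exp.
  assert (Ha : 0 < Rabs y) by (apply Rabs_pos_lt; auto).
  pose proof ln2_pos.
  assert (E : Rabs y = exp (L * ln 2)).
  { unfold L. replace (ln (Rabs y) / ln 2 * ln 2) with (ln (Rabs y)) by (field; lra). rewrite exp_ln; auto. }
  rewrite E. rewrite plus_IZR. split.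
  - replace (Defs.Zfloor L + 1 - 1)%Z with (Defs.Zfloor L) by lia. destruct (Req_dec (IZR (Defs.Zfloor L)) L) as [Q|Q].
    + rewrite Q; lra.
    + left. apply exp_increasing. nra.
  - apply exp_increasing. nra.
Qed.

Lemma mag2_le y e : y <> 0 -> Rabs y < bpow2 e -> (mag2 y <= e)%Z.
Proof.
  intros Hy H. destruct (mag2_spec y Hy) as [H1 _].
  assert (mag2 y - 1 < e)%Z by (apply bpow2_lt_inv; lra). lia.
Qed.

Lemma mag2_ge y e : y <> 0 -> bpow2 e <= Rabs y -> (e < mag2 y)%Z.
Proof.
  intros Hy H. destruct (mag2_spec y Hy) as [_ H1].
  apply bpow2_lt_inv; lra.
Qed.

Lemma Znearest_near t n : Rabs (IZR (Znearest_even t) - t) <= Rabs (IZR n - t).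
Proof.
  destruct (Zfloor_spec t) as [H1 H2].
  assert (Hn : (n <= Defs.Zfloor t)%Z \/ (Defs.Zfloor t + 1 <= n)%Z) by lia.
  assert (Hn' : IZR n <= IZR (Defs.Zfloor t) \/ IZR (Defs.Zfloor t) + 1 <= IZR n).
  { destruct Hn as [Hn|Hn]; apply IZR_le in Hn; [left|right]; rewrite ?plus_IZR in Hn; lra. }
  unfold Znearest_even.
  destruct (Rlt_dec (t - IZR (Defs.Zfloor t)) (/2)).
  - unfold Rabs; repeat destruct Rcase_abs; lra.
  - destruct (Rlt_dec (/2) (t - IZR (Defs.Zfloor t))).
    + rewrite plus_IZR. unfold Rabs; repeat destruct Rcase_abs; simpl; lra.
    + destruct (Z.even (Defs.Zfloor t)); rewrite ?plus_IZR; unfold Rabs; repeat destruct Rcase_abs; simpl; lra.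
Qed.

Lemma Znearest_half t : Rabs (IZR (Znearest_even t) - t) <= /2.
Proof.
  destruct (Zfloor_spec t) as [H1 H2].
  destruct (Rle_dec (t - IZR (Defs.Zfloor t)) (/2)).
  - eapply Rle_trans; [apply (Znearest_near t (Defs.Zfloor t))|].
    unfold Rabs; destruct Rcase_abs; lra.
  - eapply Rle_trans; [apply (Znearest_near t (Defs.Zfloor t + 1))|].
    rewrite plus_IZR. unfold Rabs; destruct Rcase_abs; simpl; lra.
Qed.

Lemma Znearest_int n : Znearest_even (IZR n) = n.
Proof.
  pose proof (Znearest_half (IZR n)) as H.
  rewrite <- minus_IZR, <- abs_IZR in H.
  assert (Z.abs (Znearest_even (IZR n) - n) < 1)%Z.
  { apply lt_IZR. simpl. lra. }
  lia.
Qed.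

Lemma round_ne_nearest y n :
  Rabs (round_ne y - y) <= Rabs (IZR n * bpow2 (cexp y) - y).
Proof.
  unfold round_ne. set (e := cexp y).
  pose proof (bpow2_pos e) as He.
  pose proof (Znearest_near (y * bpow2 (- e)) n) as H.
  set (t := y * bpow2 (-e)) in *.
  assert (E2 : forall z, z * bpow2 e - y = (z - t) * bpow2 e).
  { intro z. unfold t. replace ((z - y*bpow2(-e))*bpow2 e) with (z*bpow2 e - y*(bpow2(-e)*bpow2 e)) by ring.
    rewrite <- bpow2_add. replace (-e+e)%Z with 0%Z by lia. unfold bpow2; simpl; ring. }
  rewrite !E2.
  rewrite !Rabs_mult, (Rabs_pos_eq (bpow2 e)) by lra.
  apply Rmult_le_compat_r; lra.
Qed.

Lemma round_ne_half y : Rabs (round_ne y - y) <= bpow2 (cexp y) / 2.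
Proof.
  unfold round_ne. set (e := cexp y).
  pose proof (bpow2_pos e) as He.
  pose proof (Znearest_half (y * bpow2 (- e))) as H.
  set (t := y * bpow2 (-e)) in *.
  assert (E2 : forall z, z * bpow2 e - y = (z - t) * bpow2 e).
  { intro z. unfold t. replace ((z - y*bpow2(-e))*bpow2 e) with (z*bpow2 e - y*(bpow2(-e)*bpow2 e)) by ring.
    rewrite <- bpow2_add. replace (-e+e)%Z with 0%Z by lia. unfold bpow2; simpl; ring. }
  rewrite !E2.
  rewrite !Rabs_mult, (Rabs_pos_eq (bpow2 e)) by lra.
  nra.
Qed.

Lemma bpow2_IZR k : (0 <= k)%Z -> bpow2 k = IZR (2 ^ k).
Proof.
  intros Hk. rewrite <- (Z2Nat.id k Hk). unfold bpow2.
  rewrite <- pow_powerRZ, pow_IZR. reflexivity.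
Qed.

Lemma round_ne_exact y M e : y = IZR M * bpow2 e -> (Z.abs M < 2 ^ 53)%Z ->
  (-1074 <= e)%Z -> round_ne y = y.
Proof.
  intros Hy HM He.
  destruct (Z.eq_dec M 0) as [->|HM0].
  - subst y. unfold round_ne. rewrite !Rmult_0_l. rewrite Znearest_int. ring.
  - assert (Hy0 : y <> 0).
    { subst y. apply Rmult_integral_contrapositive; split; [apply not_0_IZR; auto|].
      pose proof (bpow2_pos e); lra. }
    assert (Hm : (mag2 y <= e + 53)%Z).
    { apply mag2_le; auto. subst y. rewrite Rabs_mult, (Rabs_pos_eq (bpow2 e)) by (left; apply bpow2_pos).
      rewrite bpow2_add, (Rmult_comm (bpow2 e)). apply Rmult_lt_compat_r; [apply bpow2_pos|].
      rewrite <- abs_IZR. unfold bpow2. simpl powerRZ.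
      apply IZR_lt in HM. simpl in HM. lra. }
    assert (Hc : (cexp y <= e)%Z) by (unfold cexp; lia).
    unfold round_ne.
    assert (E : y * bpow2 (- cexp y) = IZR (M * 2 ^ (e - cexp y))).
    { rewrite mult_IZR. rewrite Hy at 1. rewrite Rmult_assoc, <- bpow2_add, <- bpow2_IZR by lia.
      replace (e + - cexp y)%Z with (e - cexp y)%Z by lia. reflexivity. }
    rewrite E, Znearest_int, <- E, Rmult_assoc, <- bpow2_add.
    replace (- cexp y + cexp y)%Z with 0%Z by lia. unfold bpow2; simpl; ring.
Qed.

Lemma bpow2_52 : bpow2 52 = 4503599627370496.
Proof. unfold bpow2; simpl; lra. Qed.
Lemma bpow2_1 : bpow2 1 = 2.
Proof. unfold bpow2; simpl; lra. Qed.

Lemma round_ne_rel y : bpow2 (-100) <= Rabs y ->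
  Rabs (round_ne y - y) <= bpow2 (-53) * Rabs y /\
  Rabs (round_ne y - y) <= bpow2 (-53) * Rabs (round_ne y) /\
  cexp y = (mag2 y - 53)%Z /\
  bpow2 (mag2 y - 1) <= Rabs (round_ne y).
Proof.
  intros H.
  assert (Hy : y <> 0).
  { intro E; rewrite E, Rabs_R0 in H; pose proof (bpow2_pos (-100)); lra. }
  pose proof (mag2_ge y (-100) Hy H) as Hm.
  destruct (mag2_spec y Hy) as [Hm1 Hm2].
  assert (Hc : cexp y = (mag2 y - 53)%Z) by (unfold cexp; lia).
  set (c := cexp y) in *.
  pose proof (round_ne_half y) as Hh. fold c in Hh.
  assert (Eg : bpow2 c / 2 = bpow2 (-53) * bpow2 (mag2 y - 1)).
  { rewrite <- bpow2_add. replace c with ((-53 + (mag2 y - 1)) + 1)%Z by lia.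
    rewrite bpow2_add, bpow2_1. field. }
  assert (Hl : bpow2 (mag2 y - 1) <= Rabs (round_ne y)).
  { unfold round_ne. fold c.
    pose proof (Znearest_half (y * bpow2 (- c))) as Hz.
    set (m := Znearest_even (y * bpow2 (- c))) in *.
    assert (Ht : bpow2 52 <= Rabs (y * bpow2 (-c))).
    { rewrite Rabs_mult, (Rabs_pos_eq (bpow2 (-c))) by (left; apply bpow2_pos).
      replace 52%Z with ((mag2 y - 1) + - c)%Z by lia. rewrite bpow2_add.
      apply Rmult_le_compat_r; [left; apply bpow2_pos|]. auto. }
    rewrite bpow2_52 in Ht.
    assert (Hm' : (2^52 <= Z.abs m)%Z).
    { assert (H0 : IZR (2^52 - 1) < IZR (Z.abs m)).
      { rewrite abs_IZR, minus_IZR. simpl. revert Hz Ht. unfold Rabs; repeat destruct Rcase_abs; lra. }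
      apply lt_IZR in H0. lia. }
    apply IZR_le in Hm'. rewrite abs_IZR in Hm'.
    rewrite Rabs_mult, (Rabs_pos_eq (bpow2 c)) by (left; apply bpow2_pos).
    replace (mag2 y - 1)%Z with (52 + c)%Z by lia. rewrite bpow2_add, bpow2_52.
    apply Rmult_le_compat_r; [left; apply bpow2_pos|]. simpl in Hm'. lra. }
  pose proof (bpow2_pos (-53)).
  split; [|split; [|split; auto]].
  - rewrite Eg in Hh. eapply Rle_trans; [apply Hh|]. apply Rmult_le_compat_l; lra.
  - rewrite Eg in Hh. eapply Rle_trans; [apply Hh|]. apply Rmult_le_compat_l; lra.
Qed.

Lemma round_int_near w n : Rabs (w - IZR (round_int w)) <= Rabs (w - IZR n).
Proof.
  unfold round_int. destruct (Zfloor_spec (w + /2)) as [H1 H2].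
  set (r := Defs.Zfloor (w + /2)) in *.
  assert (Hn : (n <= r - 1)%Z \/ n = r \/ (r + 1 <= n)%Z) by lia.
  destruct Hn as [Hn|[Hn|Hn]].
  - apply IZR_le in Hn. rewrite minus_IZR in Hn. simpl in Hn.
    unfold Rabs; repeat destruct Rcase_abs; lra.
  - subst; lra.
  - apply IZR_le in Hn. rewrite plus_IZR in Hn. simpl in Hn.
    unfold Rabs; repeat destruct Rcase_abs; lra.
Qed.

Lemma double_pow10_exact i : (i <= 22)%nat -> double_pow10 i = 10 ^ i.
Proof.
  intros Hi. unfold double_pow10.
  apply round_ne_exact with (M := (5 ^ Z.of_nat i)%Z) (e := Z.of_nat i).
  - replace 10 with (5 * 2) by lra. rewrite Rpow_mult_distr.
    unfold bpow2. rewrite <- pow_powerRZ.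
    replace 5 with (IZR 5) by reflexivity. rewrite pow_IZR. reflexivity.
  - rewrite Z.abs_eq by (apply Z.pow_nonneg; lia).
    apply Z.le_lt_trans with (5 ^ 22)%Z.
    + apply Z.pow_le_mono_r; lia.
    + reflexivity.
  - lia.
Qed.

Lemma u_val : bpow2 (-53) = / 9007199254740992.
Proof. unfold bpow2. simpl. lra. Qed.

Lemma u52_val : bpow2 (-52) = 2 * bpow2 (-53).
Proof. rewrite u_val. unfold bpow2. simpl. lra. Qed.

Lemma b100 : bpow2 (-100) * 10 ^ 22 <= / 2.
Proof. unfold bpow2. simpl. lra. Qed.

Lemma pow10_pos i : 0 < 10 ^ i.
Proof. apply pow_lt; lra. Qed.

Lemma pow10_ge1 i : 1 <= 10 ^ i.
Proof. apply pow_R1_Rle; lra. Qed.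

Lemma pow10_le i j : (i <= j)%nat -> 10 ^ i <= 10 ^ j.
Proof. intros; apply Rle_pow; lra || auto. Qed.

Lemma step_facts v x alpha S i :
  v = round_ne x -> x * 10 ^ alpha = IZR S -> (1 <= Z.abs S)%Z ->
  (alpha <= 22)%nat -> (i <= alpha)%nat ->
  let u := bpow2 (-53) in
  let y := v * 10 ^ i in
  let w := fmul_pow10 v i in
  Rabs (v - x) <= u * Rabs v /\ Rabs (v - x) <= u * Rabs x /\
  w = round_ne y /\
  Rabs (w - y) <= u * Rabs y /\ Rabs (w - y) <= u * Rabs w /\
  cexp y = (mag2 y - 53)%Z /\ bpow2 (mag2 y - 1) <= Rabs w /\ y <> 0.
Proof.
  intros Hv Hx HS Ha Hi u y w.
  pose proof (pow10_pos alpha) as Pa. pose proof (pow10_le _ _ Ha) as Pa2.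
  pose proof (pow10_pos i) as Pi. pose proof (pow10_ge1 i) as Pi1.
  pose proof b100 as B. pose proof (bpow2_pos (-100)) as B0.
  assert (HSr : 1 <= Rabs x * 10 ^ alpha).
  { rewrite <- (Rabs_pos_eq (10 ^ alpha)) by lra. rewrite <- Rabs_mult, Hx, <- abs_IZR.
    apply IZR_le in HS. exact HS. }
  assert (Hx1 : 2 * bpow2 (-100) <= Rabs x).
  { assert (bpow2 (-100) * 10 ^ alpha <= / 2) by nra. nra. }
  destruct (round_ne_rel x) as [R1 [R2 _]]; [lra|].
  rewrite <- Hv in R1, R2. change (bpow2 (-53)) with u in R1, R2.
  assert (Hu : u = / 9007199254740992) by apply u_val.
  assert (Hv1 : bpow2 (-100) <= Rabs v).
  { assert (Rabs x - Rabs v <= Rabs (v - x)).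
    { unfold Rabs; repeat destruct Rcase_abs; lra. }
    assert (u * Rabs x <= /2 * Rabs x) by (apply Rmult_le_compat_r; [apply Rabs_pos|lra]).
    lra. }
  assert (Hy1 : bpow2 (-100) <= Rabs y).
  { unfold y. rewrite Rabs_mult, (Rabs_pos_eq (10 ^ i)) by lra. nra. }
  assert (Hw : w = round_ne y).
  { unfold w, fmul_pow10, y. rewrite double_pow10_exact by lia. reflexivity. }
  destruct (round_ne_rel y Hy1) as [Q1 [Q2 [Q3 Q4]]].
  rewrite <- Hw in Q1, Q2, Q4. change (bpow2 (-53)) with u in Q1, Q2.
  repeat split; auto.
  intro E; rewrite E, Rabs_R0 in Hy1; lra.
Qed.

Lemma last_step v x alpha S :
  v = round_ne x -> x * 10 ^ alpha = IZR S -> (1 <= Z.abs S)%Z ->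
  (Z.abs S < 10 ^ 15)%Z -> (alpha <= 22)%nat ->
  eps_i v alpha <= mu_i v alpha.
Proof.
  intros Hv Hx HS HS2 Ha.
  destruct (step_facts v x alpha S alpha Hv Hx HS Ha (le_n _))
    as [R1 [R2 [Hw [Q1 [Q2 [Q3 [Q4 Hy0]]]]]]].
  set (u := bpow2 (-53)) in *. set (y := v * 10 ^ alpha) in *.
  set (w := fmul_pow10 v alpha) in *.
  assert (Hu : u = / 9007199254740992) by apply u_val.
  pose proof (pow10_pos alpha) as Pa.
  assert (HyS : Rabs (y - IZR S) <= u * Rabs y).
  { rewrite <- Hx. unfold y.
    replace (v * 10 ^ alpha - x * 10 ^ alpha) with ((v - x) * 10 ^ alpha) by ring.
    rewrite !Rabs_mult, (Rabs_pos_eq (10 ^ alpha)) by lra. nra. }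
  apply IZR_lt in HS2. rewrite abs_IZR in HS2. simpl in HS2.
  assert (Hyb : Rabs y < bpow2 53).
  { unfold bpow2; simpl.
    assert (Rabs y - Rabs (IZR S) <= Rabs (y - IZR S)) by (unfold Rabs; repeat destruct Rcase_abs; lra).
    assert (0 <= u * Rabs y) by (apply Rmult_le_pos; [lra|apply Rabs_pos]).
    nra. }
  pose proof (mag2_le y 53 Hy0 Hyb) as Hm.
  destruct (mag2_spec y Hy0) as [M1 M2].
  set (c := cexp y) in *.
  set (g := bpow2 c).
  assert (Hg : 0 < g) by apply bpow2_pos.
  set (n := (S * 2 ^ (- c))%Z).
  assert (En : IZR n * g = IZR S).
  { unfold n, g. rewrite mult_IZR, <- bpow2_IZR by lia. rewrite Rmult_assoc, <- bpow2_add.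
    replace (- c + c)%Z with 0%Z by lia. unfold bpow2; simpl; ring. }
  pose proof (round_ne_nearest y n) as Hn. rewrite <- Hw in Hn. fold c g in Hn. rewrite En in Hn.
  assert (Ew : exists m, w = IZR m * g).
  { rewrite Hw. unfold round_ne. fold c. fold g. eexists; reflexivity. }
  destruct Ew as [m Ew].
  assert (Hug : u * bpow2 (mag2 y) = g).
  { unfold u, g. rewrite <- bpow2_add. f_equal. lia. }
  assert (HwS : Rabs (w - IZR S) < 2 * g).
  { assert (Rabs (w - IZR S) <= Rabs (w - y) + Rabs (y - IZR S)) by
      (unfold Rabs; repeat destruct Rcase_abs; lra).
    assert (Rabs (IZR S - y) = Rabs (y - IZR S)) by (unfold Rabs; repeat destruct Rcase_abs; lra).
    assert (u * Rabs y < u * bpow2 (mag2 y)) by (apply Rmult_lt_compat_l; lra).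
    lra. }
  assert (HwS2 : Rabs (w - IZR S) <= g).
  { rewrite Ew, <- En in HwS |- *.
    replace (IZR m * g - IZR n * g) with (IZR (m - n) * g) in * by (rewrite minus_IZR; ring).
    rewrite Rabs_mult, (Rabs_pos_eq g) in * by lra.
    rewrite <- abs_IZR in *.
    assert (IZR (Z.abs (m - n)) < 2) by (apply Rmult_lt_reg_r with g; lra).
    apply lt_IZR in H. assert (Z.abs (m - n) <= 1)%Z by lia.
    apply IZR_le in H0. simpl in H0. nra. }
  assert (Hgw : g <= Rabs w * bpow2 (-52)).
  { rewrite u52_val. fold u.
    assert (g = 2 * u * bpow2 (mag2 y - 1)).
    { unfold g, u. rewrite <- (bpow2_1), <- !bpow2_add. f_equal. lia. }
    assert (0 <= u) by lra. nra. }
  unfold eps_i, mu_i. fold w.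
  pose proof (round_int_near w S).
  lra.
Qed.

Lemma mid_step v x alpha S i :
  v = round_ne x -> x * 10 ^ alpha = IZR S -> (1 <= Z.abs S)%Z ->
  (Z.abs S < 10 ^ 15)%Z -> (alpha <= 22)%nat -> (i < alpha)%nat ->
  ~ (10 | S)%Z ->
  eps_i v i > mu_i v i.
Proof.
  intros Hv Hx HS HS2 Ha Hi Hd.
  destruct (step_facts v x alpha S i Hv Hx HS Ha (Nat.lt_le_incl _ _ Hi))
    as [R1 [R2 [Hw [Q1 [Q2 [Q3 [Q4 Hy0]]]]]]].
  set (u := bpow2 (-53)) in *. set (y := v * 10 ^ i) in *.
  set (w := fmul_pow10 v i) in *.
  assert (Hu : u = / 9007199254740992) by apply u_val.
  destruct (alpha - i)%nat as [|k'] eqn:Ek; [lia|].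
  assert (Ea : alpha = (i + Datatypes.S k')%nat) by lia.
  set (K := 10 ^ Datatypes.S k').
  pose proof (pow10_pos (Datatypes.S k')) as PK. fold K in PK.
  pose proof (pow10_pos i) as Pi.
  set (T := x * 10 ^ i).
  assert (ET : T * K = IZR S) by (unfold T, K; rewrite <- Hx, Ea, pow_add; ring).
  set (r := round_int w).
  assert (HTr : 1 <= Rabs (T - IZR r) * K).
  { rewrite <- (Rabs_pos_eq K) by lra. rewrite <- Rabs_mult.
    replace ((T - IZR r) * K) with (IZR (S - r * 10 ^ Z.of_nat (Datatypes.S k'))).
    2:{ rewrite minus_IZR, mult_IZR, <- pow_IZR, <- ET. unfold K. simpl. ring. }
    rewrite <- abs_IZR. apply IZR_le.
    assert (S - r * 10 ^ Z.of_nat (Datatypes.S k') <> 0)%Z; [|lia].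
    intro E. apply Hd. exists (r * 10 ^ Z.of_nat k')%Z.
    rewrite Nat2Z.inj_succ, Z.pow_succ_r in E by lia. lia. }
  assert (HyT : Rabs (y - T) <= u * Rabs y).
  { unfold y, T.
    replace (v * 10 ^ i - x * 10 ^ i) with ((v - x) * 10 ^ i) by ring.
    rewrite !Rabs_mult, (Rabs_pos_eq (10 ^ i)) by lra. nra. }
  assert (HTS : Rabs T * K <= 10 ^ 15).
  { rewrite <- (Rabs_pos_eq K) by lra. rewrite <- Rabs_mult, ET, <- abs_IZR.
    apply IZR_lt in HS2. simpl in HS2. simpl. lra. }
  assert (Hy1 : Rabs y * (1 - u) <= Rabs T).
  { assert (Rabs y - Rabs T <= Rabs (y - T)) by (unfold Rabs; repeat destruct Rcase_abs; lra).
    lra. }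
  assert (HP : 2 * u * (2 + u) * (Rabs y * K) < 1).
  { assert (Rabs y * K * (1 - u) <= 10 ^ 15).
    { replace (Rabs y * K * (1 - u)) with ((Rabs y * (1 - u)) * K) by ring.
      apply Rle_trans with (Rabs T * K); auto. apply Rmult_le_compat_r; lra. }
    set (P := Rabs y * K) in *. rewrite Hu in *. simpl in *. lra. }
  assert (HA : 2 * u * (2 + u) * Rabs y < Rabs (T - IZR r)).
  { apply Rmult_lt_reg_r with K; auto. lra. }
  unfold eps_i, mu_i. fold w. fold r. rewrite u52_val. fold u.
  assert (Rabs (T - IZR r) <= Rabs (w - IZR r) + Rabs (w - y) + Rabs (y - T)) by
    (unfold Rabs; repeat destruct Rcase_abs; lra).
  assert (Rabs w <= Rabs y + Rabs (w - y)) by (unfold Rabs; repeat destruct Rcase_abs; lra).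
  assert (0 <= u) by lra.
  assert (u * Rabs w <= u * (Rabs y + u * Rabs y)) by (apply Rmult_le_compat_l; lra).
  nra.
Qed.

Lemma DS_bound x alpha S : x <> 0 -> x * 10 ^ alpha = IZR S ->
  (DS_of x alpha <= 15)%Z -> (Z.abs S < 10 ^ 15)%Z.
Proof.
  intros Hx HS HD. unfold DS_of in HD.
  destruct (Req_EM_T x 0) as [E|_]; [contradiction|].
  set (L := ln (Rabs x) / ln 10) in *.
  destruct (Zfloor_spec L) as [_ H2].
  assert (Hf : (Defs.Zfloor L + 1 <= 15 - Z.of_nat alpha)%Z) by lia.
  apply IZR_le in Hf. rewrite plus_IZR, minus_IZR, <- INR_IZR_INZ in Hf. simpl in Hf.
  assert (l10 : 0 < ln 10) by (rewrite <- ln_1; apply ln_increasing; lra).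
  assert (Ha : 0 < Rabs x) by (apply Rabs_pos_lt; auto).
  assert (Ex : Rabs x = exp (L * ln 10)).
  { unfold L. replace (ln (Rabs x) / ln 10 * ln 10) with (ln (Rabs x)) by (field; lra).
    rewrite exp_ln; auto. }
  assert (Hx1 : Rabs x < exp ((15 - INR alpha) * ln 10)).
  { rewrite Ex. apply exp_increasing. nra. }
  assert (E10 : forall n, 10 ^ n = exp (INR n * ln 10)).
  { intro n. rewrite <- Rpower_pow by lra. reflexivity. }
  assert (Hlt : Rabs x * 10 ^ alpha < 10 ^ 15).
  { rewrite (E10 15%nat). 
    apply Rlt_le_trans with (exp ((15 - INR alpha) * ln 10) * 10 ^ alpha).
    - apply Rmult_lt_compat_r; auto. apply pow_lt; lra.
    - rewrite E10, <- exp_plus. right. f_equal. simpl. ring. }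
  rewrite <- (Rabs_pos_eq (10 ^ alpha)) in Hlt by (left; apply pow_lt; lra).
  rewrite <- Rabs_mult, HS, <- abs_IZR in Hlt.
  apply lt_IZR. simpl. simpl in Hlt. lra.
Qed.

Theorem theorem4 (v x : R) (alpha : nat) :
  is_zero_or_normal_double v ->
  is_DF v x ->
  is_DP x alpha ->
  (alpha <= 22)%nat ->
  (DS_of x alpha <= 15)%Z ->
  (forall i : nat, (i < alpha)%nat -> eps_i v i > mu_i v i) /\
  eps_i v alpha <= mu_i v alpha.
Proof.
  intros _ HDF [[S HS] Hmin] Ha HDS.
  destruct HDF as [[-> ->] | [Hv0 [k [s [n [[Hk [Hs [Hxe Hr]]] _]]]]]].
  - assert (alpha = 0%nat).
    { destruct alpha as [|a]; auto. exfalso. apply (Hmin 0%nat); [lia|].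
      exists 0%Z. simpl. ring. }
    subst alpha. split; [intros; lia|].
    assert (R0 : round_ne 0 = 0).
    { apply round_ne_exact with (M := 0%Z) (e := 0%Z); [simpl; ring|simpl; lia|lia]. }
    unfold eps_i, mu_i, fmul_pow10. rewrite Rmult_0_l, R0.
    unfold round_int. rewrite (Zfloor_unique (0 + /2) 0) by (simpl; lra).
    rewrite Rminus_0_r, Rabs_R0. lra.
  - assert (Hx0 : x <> 0).
    { rewrite Hxe. apply Rmult_integral_contrapositive. split.
      - apply not_0_IZR. intro E; subst s. simpl in Hs.
        assert (0 < 10 ^ (Z.of_nat k - 1))%Z by (apply Z.pow_pos_nonneg; lia). lia.
      - unfold pow10. apply powerRZ_NOR. lra. }
    assert (HS1 : (1 <= Z.abs S)%Z).
    { assert (S <> 0%Z); [|lia]. intro E; subst S.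
      apply Rmult_integral in HS. destruct HS as [H|H]; [contradiction|].
      apply (pow_nonzero 10 alpha); lra. }
    assert (HS2 := DS_bound x alpha S Hx0 HS HDS).
    assert (Hv : v = round_ne x) by auto.
    split.
    + intros i Hi. apply (mid_step v x alpha S i Hv HS HS1 HS2 Ha Hi).
      intros [z Hz]. apply (Hmin (alpha - 1)%nat); [lia|].
      exists z. apply Rmult_eq_reg_r with 10; [|lra].
      destruct alpha as [|a]; [lia|]. replace (Datatypes.S a - 1)%nat with a by lia.
      simpl in HS. replace (x * 10 ^ a * 10) with (x * (10 * 10 ^ a)) by ring.
      rewrite HS, Hz, mult_IZR. simpl. ring.
    + apply (last_step v x alpha S Hv HS HS1 HS2 Ha).
Qed.
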